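(* Let $n\ge1$ and let $k$ be an integer with $1\le k\le \frac n4+1$. Let $f:\mathbb{R}^n\to\mathbb{R}$ be radial, $f(x)=f_1(\|x\|_2)$, where $f_1$ is $2k$ times continuously differentiable on $(0,\infty)$. Then there are real numbers $c_{i,j}$ (depending on $n$ and $k$), indexed by integers $0\le i\le 2k$, $0\le j\le 2k-1$ with $i+j\le 2k$, satisfying $\sum_{i,j}|c_{i,j}|\le 5^k$, such that for all $x\ne0$, with $r=\|x\|_2$, $$((I-\Delta)^kf)(x)=\sum_{\substack{0\le i\le 2k,\ 0\le j\le 2k-1\\ i+j\le 2k}}\frac{c_{i,j}\,n^j f_1^{(i)}(r)}{r^j}.$$
   Context: $\Delta=\sum_{i=1}^n\partial^2/\partial x_i^2$ is the Laplacian and $(I-\Delta)h=h-\Delta h$; $(I-\Delta)^k$ is its $k$-fold iterate. $f_1^{(i)}$ denotes the $i$-th derivative of $f_1$. *)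

(* Defs.v *)
From Stdlib Require Import Reals Lra Lia Classical ClassicalEpsilon.
Open Scope R_scope.

(* Points of R^n are represented as x : nat -> R; only coordinates 0..n-1 are used. *)

Fixpoint sumR (m : nat) (F : nat -> R) : R :=
  match m with
  | O => 0
  | S p => sumR p F + F p
  end.

Definition norm2 (n : nat) (x : nat -> R) : R :=
  sqrt (sumR n (fun i => x i ^ 2)).

Definition upd (x : nat -> R) (i : nat) (t : R) : nat -> R :=
  fun j => if Nat.eqb j i then t else x j.

(* the derivative of h at t (chosen classically; meaningful where h is differentiable) *)
Definition der (h : R -> R) (t : R) : R :=
  epsilon (inhabits 0) (fun l => derivable_pt_lim h t l).

Definition pderiv (i : nat) (g : (nat -> R) -> R) (x : nat -> R) : R :=
  der (fun t => g (upd x i t)) (x i).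

Definition lap (n : nat) (g : (nat -> R) -> R) (x : nat -> R) : R :=
  sumR n (fun i => pderiv i (pderiv i g) x).

Fixpoint IminusLap (n k : nat) (g : (nat -> R) -> R) : (nat -> R) -> R :=
  match k with
  | O => g
  | S p => let h := IminusLap n p g in fun x => h x - lap n h x
  end.

(* D i is the i-th derivative of f on (0,oo), for i <= m, and D m is continuous
   there: i.e. f is m times continuously differentiable on (0,oo) with
   derivatives f^(i) = D i on (0,oo). *)
Definition CmDerivs (m : nat) (f : R -> R) (D : nat -> R -> R) : Prop :=
  (forall r, 0 < r -> D O r = f r) /\
  (forall i r, (i < m)%nat -> 0 < r -> derivable_pt_lim (D i) r (D (S i) r)) /\
  (forall r, 0 < r -> continuity_pt (D m) r).

(* Main.v *)
Require Import Defs.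
From Stdlib Require Import Reals Lra Lia Classical ClassicalEpsilon FunctionalExtensionality List.
Open Scope R_scope.

Lemma dlim_ext (f g : R -> R) x l l' :
  derivable_pt_lim f x l -> (forall t, f t = g t) -> l = l' -> derivable_pt_lim g x l'.
Proof.
  intros H E ->. replace g with f; auto. apply functional_extensionality; auto.
Qed.

Lemma sumR_ext N F G : (forall i, (i < N)%nat -> F i = G i) -> sumR N F = sumR N G.
Proof.
  induction N; simpl; intros H; auto.
  rewrite IHN by (intros; apply H; lia). rewrite H by lia. auto.
Qed.

Lemma sumR_nonneg N F : (forall i, 0 <= F i) -> 0 <= sumR N F.
Proof. induction N; simpl; intros H; [lra|]. pose proof (H N). specialize (IHN H). lra. Qed.

Lemma sumsq_upd n y i t : (i < n)%nat ->
  sumR n (fun l => upd y i t l ^ 2) = sumR n (fun l => upd y i 0 l ^ 2) + t ^ 2.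
Proof.
  induction n; intros Hi; [lia|]. cbn [sumR].
  destruct (Nat.eq_dec i n) as [->|Hne].
  - replace (upd y n t n) with t by (unfold upd; rewrite Nat.eqb_refl; auto).
    replace (upd y n 0 n) with 0 by (unfold upd; rewrite Nat.eqb_refl; auto).
    rewrite (sumR_ext n (fun l => upd y n t l ^ 2) (fun l => upd y n 0 l ^ 2)). simpl; lra.
    intros l Hl. unfold upd. destruct (Nat.eqb_spec l n); [lia|auto].
  - rewrite IHn by lia. replace (upd y i t n) with (upd y i 0 n). lra.
    unfold upd. destruct (Nat.eqb_spec n i); [lia|auto].
Qed.

Definition Aof n y i := sumR n (fun l => upd y i 0 l ^ 2).

Lemma Aof_nonneg n y i : 0 <= Aof n y i.
Proof. apply sumR_nonneg. intros; apply pow2_ge_0. Qed.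

Lemma norm_upd n y i t : (i < n)%nat -> norm2 n (upd y i t) = sqrt (Aof n y i + t ^ 2).
Proof. intros Hi. unfold norm2, Aof. rewrite sumsq_upd; auto. Qed.

Lemma Aof_full n y i : (i < n)%nat -> Aof n y i + y i ^ 2 = sumR n (fun l => y l ^ 2).
Proof.
  intros Hi. unfold Aof. rewrite <- sumsq_upd by auto. apply sumR_ext.
  intros l _. unfold upd. destruct (Nat.eqb_spec l i); subst; auto.
Qed.

Lemma nbhd_pos A t0 : 0 <= A -> 0 < A + t0 ^ 2 ->
  exists d, 0 < d /\ forall t, Rabs (t - t0) < d -> 0 < A + t ^ 2.
Proof.
  intros HA H. destruct (Rlt_or_le 0 A) as [HA'|HA'].
  - exists 1. split; [lra|]. intros. pose proof (pow2_ge_0 t). lra.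
  - assert (t0 <> 0). { intros ->. simpl in H. lra. }
    exists (Rabs t0). split. apply Rabs_pos_lt; auto.
    intros t Ht. assert (t <> 0). { intros ->. rewrite Rminus_0_l, Rabs_Ropp in Ht. lra. }
    assert (0 < t ^ 2) by (simpl; rewrite Rmult_1_r; apply Rsqr_pos_lt; auto). lra.
Qed.

Lemma der_local (F G : R -> R) x l d : 0 < d ->
  (forall t, Rabs (t - x) < d -> F t = G t) -> derivable_pt_lim G x l -> der F x = l.
Proof.
  intros Hd E HG.
  assert (HF : derivable_pt_lim F x l).
  { intros eps He. destruct (HG eps He) as [del Hdel].
    assert (Hm : 0 < Rmin del d) by (apply Rmin_pos; [apply cond_pos|auto]).
    exists (mkposreal _ Hm). intros h Hh0 Hh. simpl in Hh.
    rewrite (E (x + h)), (E x).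
    - apply Hdel; auto. eapply Rlt_le_trans; [apply Hh|apply Rmin_l].
    - rewrite Rminus_diag, Rabs_R0; auto.
    - replace (x + h - x) with h by ring. eapply Rlt_le_trans; [apply Hh|apply Rmin_r]. }
  unfold der. apply (uniqueness_limite F x).
  - apply (epsilon_spec (inhabits 0) (fun l => derivable_pt_lim F x l)). exists l; auto.
  - auto.
Qed.

Lemma d_rho A t : 0 < A + t ^ 2 ->
  derivable_pt_lim (fun s => sqrt (A + s ^ 2)) t (t / sqrt (A + t ^ 2)).
Proof.
  intros H.
  assert (H1 : derivable_pt_lim (fun s => A + s ^ 2) t (2 * t)).
  { eapply dlim_ext. apply derivable_pt_lim_plus. apply (derivable_pt_lim_const A).
    apply (derivable_pt_lim_pow t 2). intros; reflexivity. simpl; ring. }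
  eapply dlim_ext. eapply (derivable_pt_lim_comp _ sqrt t _ _ H1).
  apply derivable_pt_lim_sqrt. auto. intros; reflexivity.
  assert (0 < sqrt (A + t^2)) by (apply sqrt_lt_R0; auto). field. lra.
Qed.

Lemma d_hrho (h h1 : R -> R) A t : 0 < A + t ^ 2 ->
  (forall r, 0 < r -> derivable_pt_lim h r (h1 r)) ->
  derivable_pt_lim (fun s => h (sqrt (A + s ^ 2))) t
     (h1 (sqrt (A + t ^ 2)) * (t / sqrt (A + t ^ 2))).
Proof.
  intros H Hh.
  eapply dlim_ext. eapply (derivable_pt_lim_comp _ h t _ _ (d_rho A t H)).
  apply Hh. apply sqrt_lt_R0; auto. intros; reflexivity. reflexivity.
Qed.

Lemma d_psi (h1 h2 : R -> R) A t : 0 < A + t ^ 2 ->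
  (forall r, 0 < r -> derivable_pt_lim h1 r (h2 r)) ->
  derivable_pt_lim (fun s => h1 (sqrt (A + s ^ 2)) * (s / sqrt (A + s ^ 2))) t
     (h2 (sqrt (A + t ^ 2)) * (t / sqrt (A + t ^ 2)) * (t / sqrt (A + t ^ 2))
      + h1 (sqrt (A + t ^ 2)) * (1 / sqrt (A + t ^ 2) - t ^ 2 / sqrt (A + t ^ 2) ^ 3)).
Proof.
  intros H Hh.
  assert (Hr : 0 < sqrt (A + t^2)) by (apply sqrt_lt_R0; auto).
  eapply dlim_ext. apply derivable_pt_lim_mult. apply (d_hrho h1 h2 A t H Hh).
  apply derivable_pt_lim_div. apply derivable_pt_lim_id. apply (d_rho A t H).
  lra. intros; reflexivity.
  unfold id, Rsqr, mult_fct, div_fct. set (r := sqrt (A + t^2)) in *. field. lra.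
Qed.

Lemma upd_upd y i t s : upd (upd y i t) i s = upd y i s.
Proof. apply functional_extensionality; intros l. unfold upd. destruct (Nat.eqb l i); auto. Qed.

Lemma upd_same y i t : upd y i t i = t.
Proof. unfold upd. rewrite Nat.eqb_refl. auto. Qed.

Lemma pderiv_radial n (G : (nat -> R) -> R) (h h1 : R -> R) y i t :
  (forall z, norm2 n z <> 0 -> G z = h (norm2 n z)) ->
  (forall r, 0 < r -> derivable_pt_lim h r (h1 r)) ->
  (i < n)%nat -> 0 < Aof n y i + t ^ 2 ->
  pderiv i G (upd y i t) =
    h1 (sqrt (Aof n y i + t ^ 2)) * (t / sqrt (Aof n y i + t ^ 2)).
Proof.
  intros HG Hh Hi Ht. unfold pderiv. rewrite upd_same.
  destruct (nbhd_pos _ _ (Aof_nonneg n y i) Ht) as [d [Hd Hdd]].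
  apply (der_local _ (fun s => h (sqrt (Aof n y i + s ^ 2))) t _ d Hd).
  - intros s Hs. rewrite upd_upd. rewrite HG; rewrite norm_upd; auto.
    apply Rgt_not_eq, sqrt_lt_R0; auto.
  - apply d_hrho; auto.
Qed.

Lemma sumR_lin N (F : nat -> R) a b :
  sumR N (fun i => a * F i + b) = a * sumR N F + INR N * b.
Proof. induction N; simpl; [ring|]. rewrite IHN. destruct N; simpl; ring. Qed.

Lemma lap_radial n (G : (nat -> R) -> R) (h h1 h2 : R -> R) y :
  (forall z, norm2 n z <> 0 -> G z = h (norm2 n z)) ->
  (forall r, 0 < r -> derivable_pt_lim h r (h1 r)) ->
  (forall r, 0 < r -> derivable_pt_lim h1 r (h2 r)) ->
  norm2 n y <> 0 ->
  lap n G y = h2 (norm2 n y) + (INR n - 1) / norm2 n y * h1 (norm2 n y).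
Proof.
  intros HG Hh Hh1 Hy.
  set (S := sumR n (fun l => y l ^ 2)).
  assert (HS0 : 0 <= S) by (apply sumR_nonneg; intros; apply pow2_ge_0).
  assert (HS : 0 < S).
  { destruct HS0 as [|HS0]; auto. exfalso. apply Hy. unfold norm2. fold S. rewrite <- HS0. apply sqrt_0. }
  set (r := norm2 n y).
  assert (Hr : 0 < r) by (apply sqrt_lt_R0; auto).
  assert (Hrr : r ^ 2 = S) by (unfold r, norm2; fold S; simpl; rewrite Rmult_1_r; apply sqrt_sqrt; lra).
  unfold lap.
  rewrite (sumR_ext n _ (fun i => (h2 r / r ^ 2 - h1 r / r ^ 3) * (y i ^ 2) + h1 r / r)).
  - rewrite sumR_lin. fold S. rewrite <- Hrr. field. lra.
  - intros i Hi. unfold pderiv at 1.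
    assert (HA : Aof n y i + y i ^ 2 = S) by (apply Aof_full; auto).
    assert (HAp : 0 < Aof n y i + y i ^ 2) by lra.
    destruct (nbhd_pos _ _ (Aof_nonneg n y i) HAp) as [d [Hd Hdd]].
    pose proof (d_psi h1 h2 _ (y i) HAp Hh1) as Hps.
    rewrite (der_local _ _ _ _ d Hd) with (2 := Hps).
    + rewrite HA. replace (sqrt S) with r by reflexivity. field. lra.
    + intros s Hs. apply pderiv_radial with (h := h); auto.
Qed.

Definition mono := (R * (nat * nat))%type.
Definition mc (m : mono) := fst m.
Definition mi (m : mono) := fst (snd m).
Definition mj (m : mono) := snd (snd m).

Definition term n (D : nat -> R -> R) (m : mono) r :=
  mc m * INR n ^ mj m * D (mi m) r / r ^ mj m.
Definition ev n D (l : list mono) r := fold_right (fun m acc => term n D m r + acc) 0 l.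

Definition dl1 n (m : mono) : list mono :=
  (mc m, (S (mi m), mj m)) ::
  match mj m with O => nil | _ => (mc m * - (INR (mj m) / INR n), (mi m, S (mj m))) :: nil end.
Definition dl n l := flat_map (dl1 n) l.
Definition sh n (l : list mono) : list mono :=
  map (fun m => (mc m * ((INR n - 1) / INR n), (mi m, S (mj m)))) l.
Definition ng (l : list mono) : list mono := map (fun m => (- mc m, snd m)) l.
Definition step n l := l ++ ng (dl n (dl n l) ++ sh n (dl n l)).

Lemma ev_app n D a b r : ev n D (a ++ b) r = ev n D a r + ev n D b r.
Proof. induction a; simpl; [ring|]. rewrite IHa; ring. Qed.

Lemma ev_ng n D l r : ev n D (ng l) r = - ev n D l r.
Proof. induction l as [|[c [i j]] l IH]; simpl; [ring|]. rewrite IH. unfold term, mc, mi, mj; simpl. unfold Rdiv; ring. Qed.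

Lemma ev_sh n D l r : (1 <= n)%nat -> r <> 0 ->
  ev n D (sh n l) r = (INR n - 1) / r * ev n D l r.
Proof.
  intros Hn Hr. assert (INR n <> 0) by (apply not_0_INR; lia).
  induction l as [|[c [i j]] l IH]; simpl; [ring|]. rewrite IH. unfold term, mc, mi, mj; simpl.
  field. split; auto. apply pow_nonzero; auto.
Qed.

Lemma ev_dl_app n D a b r : ev n D (dl n (a ++ b)) r = ev n D (dl n a) r + ev n D (dl n b) r.
Proof. unfold dl. rewrite flat_map_app. apply ev_app. Qed.

Lemma d_term n D K (m : mono) r : (1 <= n)%nat -> (mi m < K)%nat -> 0 < r ->
  (forall i r, (i < K)%nat -> 0 < r -> derivable_pt_lim (D i) r (D (S i) r)) ->
  derivable_pt_lim (term n D m) r (ev n D (dl1 n m) r).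
Proof.
  intros Hn Hm Hr HD. assert (INR n <> 0) by (apply not_0_INR; lia).
  destruct m as [c [i j]]. unfold mi in Hm; simpl in Hm.
  eapply dlim_ext. apply derivable_pt_lim_div.
  apply (derivable_pt_lim_scal (D i) (c * INR n ^ j)). apply HD; auto.
  apply (derivable_pt_lim_pow r j). apply pow_nonzero; lra.
  intros t. unfold term, mult_real_fct, div_fct, mc, mi, mj; simpl. reflexivity.
  unfold dl1, ev, term, mult_real_fct, mc, mi, mj, Rsqr; simpl.
  assert (r ^ j <> 0) by (apply pow_nonzero; lra).
  destruct j as [|j]; simpl.
  - field.
  - assert (r ^ j <> 0) by (apply pow_nonzero; lra). field. repeat split; auto; lra.
Qed.


Lemma d_ev n D K l r : (1 <= n)%nat -> 0 < r ->
  (forall i r, (i < K)%nat -> 0 < r -> derivable_pt_lim (D i) r (D (S i) r)) ->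
  Forall (fun m => (mi m < K)%nat) l ->
  derivable_pt_lim (ev n D l) r (ev n D (dl n l) r).
Proof.
  intros Hn Hr HD HF. induction HF as [|m l Hm HF IH].
  - simpl. eapply dlim_ext. apply (derivable_pt_lim_const 0). intros; reflexivity. reflexivity.
  - eapply dlim_ext. apply derivable_pt_lim_plus. apply (d_term n D K m r); auto. apply IH.
    intros; reflexivity. change (dl n (m :: l)) with (dl1 n m ++ dl n l). rewrite ev_app. reflexivity.
Qed.

Lemma ev_step n D l r : (1 <= n)%nat -> 0 < r ->
  ev n D (step n l) r = ev n D l r - (ev n D (dl n (dl n l)) r + (INR n - 1) / r * ev n D (dl n l) r).
Proof.
  intros Hn Hr. unfold step. rewrite ev_app, ev_ng, ev_app, ev_sh; auto. lra.
Qed.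

Definition deg (m : mono) := (mi m + mj m)%nat.
Definition good (m : mono) := (1 <= mj m -> 1 <= mi m)%nat.

Lemma Forall_app' {A} (P : A -> Prop) a b : Forall P a -> Forall P b -> Forall P (a ++ b).
Proof. intros; apply Forall_app; auto. Qed.

Lemma dl_deg n d l : Forall (fun m => (deg m <= d)%nat) l -> Forall (fun m => (deg m <= S d)%nat) (dl n l).
Proof.
  intros H. induction H as [|[c [i j]] l Hm H IH]; [constructor|].
  change (dl n (_ :: l)) with (dl1 n (c,(i,j)) ++ dl n l).
  apply Forall_app'; auto. unfold dl1, deg, mi, mj in *; simpl in *.
  destruct j; constructor; simpl; try lia; auto. constructor; simpl; try lia; auto.
Qed.

Lemma dl_good n l : Forall good l -> Forall good (dl n l) /\ Forall (fun m => (1 <= mi m)%nat) (dl n l).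
Proof.
  intros H. induction H as [|[c [i j]] l Hm H IH]; [split; constructor|]. destruct IH as [IH1 IH2].
  change (dl n (_ :: l)) with (dl1 n (c,(i,j)) ++ dl n l).
  unfold good, mi, mj in Hm; simpl in Hm.
  unfold dl1, good, mi, mj; simpl.
  destruct j as [|j]; simpl; split; constructor; simpl; auto; try lia.
  - constructor; simpl; auto. intros; apply Hm; lia.
  - constructor; simpl; auto. apply Hm; lia.
Qed.

Lemma sh_good n l : Forall (fun m => (1 <= mi m)%nat) l -> Forall good (sh n l).
Proof. intros H. induction H; simpl; constructor; auto. unfold good, mi; simpl. auto. Qed.

Lemma sh_deg n d l : Forall (fun m => (deg m <= d)%nat) l -> Forall (fun m => (deg m <= S d)%nat) (sh n l).
Proof. intros H. induction H; simpl; constructor; auto. unfold deg, mi, mj in *; simpl. lia. Qed.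

Lemma ng_forall (P : mono -> Prop) l : (forall c c' s, P (c, s) -> P (c', s)) -> Forall P l -> Forall P (ng l).
Proof. intros HP H. induction H as [|[c s] l Hm H IH]; simpl; constructor; eauto. Qed.

Lemma step_inv n d l : Forall (fun m => (deg m <= d)%nat) l -> Forall good l ->
  Forall (fun m => (deg m <= S (S d))%nat) (step n l) /\ Forall good (step n l).
Proof.
  intros H1 H2. unfold step. split; apply Forall_app'.
  - eapply Forall_impl; [|apply H1]. simpl; intros; lia.
  - apply ng_forall. unfold deg, mi, mj; simpl; auto.
    apply Forall_app'. apply dl_deg, dl_deg; auto. apply sh_deg, dl_deg; auto.
  - auto.
  - apply ng_forall. unfold good, mi, mj; simpl; auto.
    destruct (dl_good n l H2) as [G1 G2].
    apply Forall_app'. apply dl_good; auto. apply sh_good; auto.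
Qed.

Definition mass (l : list mono) := fold_right (fun m acc => Rabs (mc m) + acc) 0 l.
Lemma mass_app a b : mass (a ++ b) = mass a + mass b.
Proof. induction a; simpl; [ring|]. rewrite IHa; ring. Qed.
Lemma mass_ng l : mass (ng l) = mass l.
Proof. induction l; simpl; auto. rewrite IHl. unfold mc; simpl. rewrite Rabs_Ropp. auto. Qed.
Lemma mass_nonneg l : 0 <= mass l.
Proof. induction l; simpl; [lra|]. pose proof (Rabs_pos (mc a)). lra. Qed.

Lemma mass_one n (m : mono) : (1 <= n)%nat -> (2 * mj m <= n)%nat ->
  mass (dl n (dl1 n m)) + mass (sh n (dl1 n m)) <= 4 * Rabs (mc m).
Proof.
  intros Hn Hj. destruct m as [c [i j]]. unfold mj in Hj; simpl in Hj.
  assert (HN : 1 <= INR n) by (apply (le_INR 1); auto).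
  assert (HN1 : Rabs ((INR n - 1) / INR n) = (INR n - 1) / INR n).
  { apply Rabs_pos_eq. apply Rmult_le_pos. lra. left; apply Rinv_0_lt_compat; lra. }
  destruct j as [|j].
  - unfold dl1, dl, sh, mass, mc, mi, mj; simpl. rewrite Rabs_mult, HN1.
    assert ((INR n - 1) / INR n <= 1). { apply Rmult_le_reg_r with (INR n). lra. field_simplify; lra. }
    pose proof (Rabs_pos c). nra.
  - cbn [dl1 dl sh mass flat_map map fold_right app mc mi mj fst snd].
    rewrite !Rabs_mult, HN1. rewrite (S_INR (S j)).
    assert (HJ1 : 1 <= INR (S j)) by (apply (le_INR 1); lia).
    assert (HJ2 : 2 * INR (S j) <= INR n) by (replace 2 with (INR 2) by (simpl; ring); rewrite <- mult_INR; apply le_INR; lia).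
    set (J := INR (S j)) in *. set (N := INR n) in *.
    assert (Hx : Rabs (- (J / N)) = J / N).
    { rewrite Rabs_Ropp. apply Rabs_pos_eq. apply Rmult_le_pos. lra. left; apply Rinv_0_lt_compat; lra. }
    assert (Hy : Rabs (- ((J + 1) / N)) = (J + 1) / N).
    { rewrite Rabs_Ropp. apply Rabs_pos_eq. apply Rmult_le_pos. lra. left; apply Rinv_0_lt_compat; lra. }
    rewrite Hx, Hy.
    assert (x0 : 0 <= J / N) by (apply Rmult_le_pos; [lra| left; apply Rinv_0_lt_compat; lra]).
    assert (x1 : J / N <= 1/2) by (apply Rmult_le_reg_r with N; [lra|]; field_simplify; lra).
    assert (z1 : (N - 1) / N <= 1) by (apply Rmult_le_reg_r with N; [lra|]; field_simplify; lra).
    assert (yz0 : 0 <= (J + 1) / N + (N - 1) / N) by (field_simplify; [apply Rmult_le_pos; [lra| left; apply Rinv_0_lt_compat; lra]|lra]).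
    assert (yz : (J + 1) / N + (N - 1) / N <= 3/2) by (apply Rmult_le_reg_r with N; [lra|]; field_simplify; lra).
    assert (xyz : J / N * ((J + 1) / N + (N - 1) / N) <= 3/4) by nra.
    pose proof (Rabs_pos c). nra.
Qed.

Lemma dl_app n a b : dl n (a ++ b) = dl n a ++ dl n b.
Proof. unfold dl. apply flat_map_app. Qed.
Lemma sh_app n a b : sh n (a ++ b) = sh n a ++ sh n b.
Proof. unfold sh. apply map_app. Qed.

Lemma mass_step n l : (1 <= n)%nat -> Forall (fun m => (2 * mj m <= n)%nat) l ->
  mass (step n l) <= 5 * mass l.
Proof.
  intros Hn H.
  assert (Ha : mass (dl n (dl n l)) + mass (sh n (dl n l)) <= 4 * mass l).
  { induction H as [|m l Hm H IH]; [simpl; lra|].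
    change (dl n (m :: l)) with (dl1 n m ++ dl n l).
    rewrite dl_app, sh_app, !mass_app. pose proof (mass_one n m Hn Hm).
    change (mass (m :: l)) with (Rabs (mc m) + mass l). lra. }
  unfold step. rewrite mass_app, mass_ng, mass_app. lra.
Qed.

Definition cf (l : list mono) i j :=
  fold_right (fun m acc => (if andb (Nat.eqb (mi m) i) (Nat.eqb (mj m) j) then mc m else 0) + acc) 0 l.
Definition boxsum K (F : nat -> nat -> R) :=
  sumR (K + 1) (fun i => sumR K (fun j => if Nat.leb (i + j) K then F i j else 0)).
Definition inbox K (m : mono) := (mi m < K + 1 /\ mj m < K /\ mi m + mj m <= K)%nat.

Lemma sumR_plus N F G : sumR N (fun i => F i + G i) = sumR N F + sumR N G.
Proof. induction N; simpl; [ring|]. rewrite IHN; ring. Qed.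
Lemma sumR_le N F G : (forall i, (i < N)%nat -> F i <= G i) -> sumR N F <= sumR N G.
Proof. induction N; simpl; intros H; [lra|]. pose proof (H N ltac:(lia)). pose proof (IHN ltac:(intros; apply H; lia)). lra. Qed.
Lemma sumR_zero N F : (forall i, (i < N)%nat -> F i = 0) -> sumR N F = 0.
Proof. induction N; simpl; intros H; [lra|]. rewrite IHN, H; try lra; try lia. intros; apply H; lia. Qed.
Lemma sumR_single N F i0 : (i0 < N)%nat -> (forall i, (i < N)%nat -> i <> i0 -> F i = 0) -> sumR N F = F i0.
Proof.
  induction N; simpl; intros H1 H2; [lia|].
  destruct (Nat.eq_dec i0 N) as [->|Hne].
  - rewrite sumR_zero; [ring|]. intros; apply H2; lia.
  - rewrite IHN, (H2 N); try lia; try ring. intros; apply H2; lia.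
Qed.

Lemma box_single K F i0 j0 : inbox K (0, (i0, j0)) ->
  (forall i j, (i <> i0 \/ j <> j0) -> F i j = 0) -> boxsum K F = F i0 j0.
Proof.
  intros [H1 [H2 H3]] HF. unfold mi, mj in *; simpl in *. unfold boxsum.
  rewrite (sumR_single _ _ i0); auto.
  - rewrite (sumR_single _ _ j0); auto.
    + replace (Nat.leb (i0 + j0) K) with true; auto. symmetry; apply Nat.leb_le; auto.
    + intros j _ Hj. rewrite HF; auto. destruct (Nat.leb _ _); auto.
  - intros i _ Hi. apply sumR_zero. intros j _. rewrite HF; auto. destruct (Nat.leb _ _); auto.
Qed.

Lemma boxsum_plus K F G : boxsum K (fun i j => F i j + G i j) = boxsum K F + boxsum K G.
Proof.
  unfold boxsum. rewrite <- sumR_plus. apply sumR_ext; intros i _.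
  rewrite <- sumR_plus. apply sumR_ext; intros j _. destruct (Nat.leb _ _); ring.
Qed.
Lemma boxsum_le K F G : (forall i j, F i j <= G i j) -> boxsum K F <= boxsum K G.
Proof.
  intros H. unfold boxsum. apply sumR_le; intros i _. apply sumR_le; intros j _.
  destruct (Nat.leb _ _); auto. lra.
Qed.

Lemma box_ev K n D l r : Forall (inbox K) l ->
  boxsum K (fun i j => cf l i j * INR n ^ j * D i r / r ^ j) = ev n D l r.
Proof.
  intros H. induction H as [|[c [i0 j0]] l Hm H IH].
  - unfold boxsum. apply sumR_zero; intros. apply sumR_zero; intros. simpl. destruct (Nat.leb _ _); auto. unfold Rdiv; ring.
  - simpl. rewrite <- IH. unfold mi, mj, mc; simpl.
    set (d := fun i j => if andb (Nat.eqb i0 i) (Nat.eqb j0 j) then c else 0).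
    transitivity (boxsum K (fun i j => d i j * INR n ^ j * D i r / r ^ j + cf l i j * INR n ^ j * D i r / r ^ j)).
    { f_equal. do 2 (apply functional_extensionality; intro). unfold d, Rdiv; ring. }
    rewrite boxsum_plus. f_equal.
    rewrite (box_single K _ i0 j0).
    + unfold d. rewrite !Nat.eqb_refl; simpl. unfold term, mc, mi, mj; simpl. reflexivity.
    + unfold inbox in *; auto.
    + intros i j Hij. unfold d. destruct (Nat.eqb_spec i0 i), (Nat.eqb_spec j0 j); simpl; try (unfold Rdiv; ring). lia.
Qed.

Lemma box_mass K l : Forall (inbox K) l -> boxsum K (fun i j => Rabs (cf l i j)) <= mass l.
Proof.
  intros H. induction H as [|[c [i0 j0]] l Hm H IH].
  - unfold boxsum. rewrite sumR_zero; [simpl; lra|]. intros. apply sumR_zero; intros. simpl. destruct (Nat.leb _ _); auto. apply Rabs_R0.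
  - simpl. unfold mi, mj, mc; simpl.
    set (d := fun i j => if andb (Nat.eqb i0 i) (Nat.eqb j0 j) then c else 0).
    eapply Rle_trans. apply (boxsum_le K _ (fun i j => Rabs (d i j) + Rabs (cf l i j))).
    intros; unfold d; apply Rabs_triang.
    rewrite boxsum_plus.
    rewrite (box_single K _ i0 j0).
    + unfold d. rewrite !Nat.eqb_refl; simpl. change (mass ((c, (i0, j0)) :: l)) with (Rabs c + mass l). lra.
    + unfold inbox in *; auto.
    + intros i j Hij. unfold d. destruct (Nat.eqb_spec i0 i), (Nat.eqb_spec j0 j); simpl; try apply Rabs_R0. lia.
Qed.

Definition l0 : list mono := (1, (0%nat, 0%nat)) :: nil.
Definition Lm n m := Nat.iter m (step n) l0.

Lemma Lm_inv n m : Forall (fun x => (deg x <= 2 * m)%nat) (Lm n m) /\ Forall good (Lm n m).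
Proof.
  induction m as [|m [IH1 IH2]].
  - split; repeat constructor; unfold deg, good, mi, mj; simpl; lia.
  - change (Lm n (S m)) with (step n (Lm n m)).
    replace (2 * S m)%nat with (S (S (2 * m))) by lia. apply step_inv; auto.
Qed.

Lemma Forall_deg_weak P d l : Forall (fun x => (deg x <= d)%nat) l -> (forall x, (deg x <= d)%nat -> P x) -> Forall P l.
Proof. intros H HP. eapply Forall_impl; [|apply H]. auto. Qed.

Theorem lemmaF3 (n k : nat) :
  (1 <= n)%nat -> (1 <= k)%nat -> INR k <= INR n / 4 + 1 ->
  exists c : nat -> nat -> R,
    sumR (2 * k + 1) (fun i => sumR (2 * k) (fun j =>
      if Nat.leb (i + j) (2 * k) then Rabs (c i j) else 0)) <= 5 ^ k /\
    forall (f1 : R -> R) (D : nat -> R -> R),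
      CmDerivs (2 * k) f1 D ->
      forall x : nat -> R, norm2 n x <> 0 ->
        IminusLap n k (fun y => f1 (norm2 n y)) x =
        sumR (2 * k + 1) (fun i => sumR (2 * k) (fun j =>
          if Nat.leb (i + j) (2 * k)
          then c i j * INR n ^ j * D i (norm2 n x) / norm2 n x ^ j
          else 0)).
Proof.
  intros Hn Hk Hkn.
  assert (H4 : (4 * k <= n + 4)%nat).
  { apply INR_le. rewrite mult_INR, plus_INR. simpl (INR 4). lra. }
  assert (Hbox : Forall (inbox (2 * k)) (Lm n k)).
  { destruct (Lm_inv n k) as [I1 I2]. induction I1 as [|x l Hx I1 IH]; constructor.
    - inversion I2; subst. unfold inbox, deg, good in *. lia.
    - inversion I2; subst. auto. }
  exists (cf (Lm n k)). split.
  - eapply Rle_trans. apply (box_mass (2 * k)); auto.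
    assert (forall m, (m <= k)%nat -> mass (Lm n m) <= 5 ^ m).
    { induction m; intros Hm. simpl. unfold mass, mc; simpl. rewrite Rabs_R1. lra.
      change (Lm n (S m)) with (step n (Lm n m)). simpl (5 ^ S m).
      eapply Rle_trans. apply mass_step; auto.
      apply (Forall_deg_weak _ (2 * m)). apply Lm_inv. unfold deg; intros; lia.
      pose proof (IHm ltac:(lia)). lra. }
    auto.
  - intros f1 D [HD0 [HD HDc]].
    assert (forall m, (m <= k)%nat -> forall y, norm2 n y <> 0 ->
      IminusLap n m (fun y => f1 (norm2 n y)) y = ev n D (Lm n m) (norm2 n y)).
    { induction m; intros Hm y Hy.
      - assert (0 < norm2 n y) by (pose proof (sqrt_pos (sumR n (fun i => y i ^ 2))); unfold norm2 in *; lra).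
        simpl. unfold term, mc, mi, mj; simpl. rewrite HD0; auto. field.
      - assert (0 < norm2 n y) by (pose proof (sqrt_pos (sumR n (fun i => y i ^ 2))); unfold norm2 in *; lra).
        cbn [IminusLap]. change (Lm n (S m)) with (step n (Lm n m)).
        destruct (Lm_inv n m) as [I1 _].
        rewrite (lap_radial n _ (ev n D (Lm n m)) (ev n D (dl n (Lm n m))) (ev n D (dl n (dl n (Lm n m))))); auto.
        + rewrite ev_step; auto. rewrite IHm; auto. lia.
        + intros z Hz. apply IHm; auto. lia.
        + intros r Hr. apply (d_ev n D (2 * k)); auto.
          apply (Forall_deg_weak _ (2 * m)); auto. unfold deg; intros; lia.
        + intros r Hr. apply (d_ev n D (2 * k)); auto.
          apply (Forall_deg_weak _ (S (2 * m))). apply dl_deg; auto. unfold deg; intros; lia. }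
    intros x Hx. rewrite H; auto. symmetry. apply (box_ev (2 * k) n D); auto.
Qed.
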